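(* There exist five distinct points $p_1,\dots,p_5$ in the plane (not necessarily in general position) such that there is no family $K_1,\dots,K_5$ of pairwise intersecting compact convex sets in the plane with $o(K_iK_jK_k)=o(p_ip_jp_k)$ for all distinct $i,j,k\in\{1,\dots,5\}$.
   Context: For points $p,q,r$ in the plane, $o(pqr)\in\{+1,0,-1\}$ is $+1$ if $p,q,r$ form a counterclockwise triangle, $-1$ if clockwise, and $0$ if they are collinear. For three pairwise intersecting compact convex sets $A,B,C$ in the plane: if $A\cap B\cap C\neq\emptyset$ then $o(ABC)=0$; otherwise $o(ABC)=o(xyz)$ for any $x\in B\cap C$, $y\in A\cap C$, $z\in A\cap B$ (this orientation is known not to depend on the choice of $x,y,z$, and is nonzero). *)

(* Defs.v *)
From HB Require Import structures.
From mathcomp Require Import all_boot all_order all_algebra.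
From mathcomp Require Import all_classical all_reals topology normedtype.
Set Implicit Arguments. Unset Strict Implicit. Unset Printing Implicit Defensive.
Import Order.TTheory GRing.Theory Num.Theory.
Local Open Scope ring_scope.
Local Open Scope classical_set_scope.

Definition orient (R : realType) (p q r : R * R) : R :=
  Num.sg ((q.1 - p.1) * (r.2 - p.2) - (q.2 - p.2) * (r.1 - p.1)).

Definition convex_set2 (R : realType) (K : set (R * R)) : Prop :=
  forall x y, K x -> K y -> forall t : R, 0 <= t -> t <= 1 ->
    K (t * x.1 + (1 - t) * y.1, t * x.2 + (1 - t) * y.2).

Definition set_orient_is (R : realType) (A B C : set (R * R)) (s : R) : Prop :=
  ((A `&` B `&` C) !=set0 /\ s = 0) \/
  ((A `&` B `&` C) = set0 /\
   forall x y z, (B `&` C) x -> (A `&` C) y -> (A `&` B) z -> orient x y z = s).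

(* Main.v *)
Require Import Defs.
From HB Require Import structures.
From mathcomp Require Import all_boot all_order all_algebra.
From mathcomp Require Import all_classical all_reals topology normedtype.
From mathcomp Require Import ring lra.
Import Order.TTheory GRing.Theory Num.Theory.
Import numFieldNormedType.Exports.
Local Open Scope ring_scope.
Local Open Scope classical_set_scope.

Definition cvx {R : realType} (t : R) (x y : R * R) : R * R :=
  (t * x.1 + (1 - t) * y.1, t * x.2 + (1 - t) * y.2).
Definition Xc {R : realType} (a b p : R * R) : R :=
  (b.1 - a.1) * (p.1 - a.1) + (b.2 - a.2) * (p.2 - a.2).
Definition Yc {R : realType} (a b p : R * R) : R :=
  (b.1 - a.1) * (p.2 - a.2) - (b.2 - a.2) * (p.1 - a.1).
Definition det2 {R : realType} (x1 y1 x2 y2 : R) := x1 * y2 - y1 * x2.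

Lemma Xc_cvx {R : realType} (a b x y : R * R) t :
  Xc a b (cvx t x y) = t * Xc a b x + (1 - t) * Xc a b y.
Proof. rewrite /Xc /cvx /=; ring. Qed.

Lemma Yc_cvx {R : realType} (a b x y : R * R) t :
  Yc a b (cvx t x y) = t * Yc a b x + (1 - t) * Yc a b y.
Proof. rewrite /Yc /cvx /=; ring. Qed.

Lemma online_eq {R : realType} (a b p q : R * R) :
  0 < Xc a b b -> Yc a b p = 0 -> Yc a b q = 0 -> Xc a b p = Xc a b q -> p = q.
Proof.
move=> hN hp hq hx.
have e1 : Xc a b b * (p.1 - q.1) = 0.
  have -> : Xc a b b * (p.1 - q.1) = (b.1 - a.1) * (Xc a b p - Xc a b q)
      - (b.2 - a.2) * (Yc a b p - Yc a b q) by rewrite /Xc /Yc; ring.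
  by rewrite hp hq hx; ring.
have e2 : Xc a b b * (p.2 - q.2) = 0.
  have -> : Xc a b b * (p.2 - q.2) = (b.2 - a.2) * (Xc a b p - Xc a b q)
      + (b.1 - a.1) * (Yc a b p - Yc a b q) by rewrite /Xc /Yc; ring.
  by rewrite hp hq hx; ring.
move/eqP: e1; rewrite mulf_eq0 (gt_eqF hN) /= subr_eq0 => /eqP e1.
move/eqP: e2; rewrite mulf_eq0 (gt_eqF hN) /= subr_eq0 => /eqP e2.
by rewrite [p]surjective_pairing [q]surjective_pairing e1 e2.
Qed.
Arguments online_eq {R a b p q}.

Lemma between {R : realType} (a b p r s : R * R) :
  0 < Xc a b b -> Yc a b p = 0 -> Yc a b r = 0 -> Yc a b s = 0 ->
  Xc a b r <= Xc a b p -> Xc a b p <= Xc a b s ->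
  exists t, 0 <= t /\ t <= 1 /\ p = cvx t s r.
Proof.
move=> hN hp hr hs h1 h2.
have [hrs|hrs] := ltP (Xc a b r) (Xc a b s).
- have hd : 0 < Xc a b s - Xc a b r by rewrite subr_gt0.
  exists ((Xc a b p - Xc a b r) / (Xc a b s - Xc a b r)).
  split; first by apply: divr_ge0; lra.
  split; first by rewrite ler_pdivrMr // mul1r; lra.
  apply: online_eq hN hp _ _; first by rewrite Yc_cvx hr hs; ring.
  rewrite Xc_cvx; field.
  by rewrite subr_eq0 gt_eqF.
- exists 0; split; first by [].
  split; first by [].
  apply: online_eq hN hp _ _; first by rewrite Yc_cvx hr hs; ring.
  rewrite Xc_cvx; lra.
Qed.
Arguments between {R a b p r s}.

Lemma cross_t {R : realType} (yx yp : R) :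
  yx * yp < 0 -> 0 <= yx / (yx - yp) /\ yx / (yx - yp) <= 1.
Proof.
move=> h.
have [hx|hx] := ltP 0 yx.
- have hp : yp < 0 by nra.
  have hd : 0 < yx - yp by lra.
  split; first by apply: divr_ge0; lra.
  by rewrite ler_pdivrMr // mul1r; lra.
- have hx' : yx < 0.
    rewrite lt_neqAle hx andbT; apply/eqP => e; rewrite e mul0r in h; lra.
  have hp : 0 < yp by nra.
  rewrite -divrNN opprB.
  have hd : 0 < yp - yx by lra.
  split; first by apply: divr_ge0; lra.
  by rewrite ler_pdivrMr // mul1r; lra.
Qed.
Arguments cross_t {R yx yp}.

Lemma cross_on {R : realType} (a b x P : R * R) :
  Yc a b x * Yc a b P < 0 ->
  Yc a b (cvx (Yc a b x / (Yc a b x - Yc a b P)) P x) = 0.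
Proof.
move=> H.
have hne : Yc a b x - Yc a b P != 0.
  apply/eqP => h.
  have e : Yc a b x = Yc a b P by lra.
  rewrite e in H; nra.
rewrite Yc_cvx; field.
exact: hne.
Qed.
Arguments cross_on {R a b x P}.

Lemma orient_Y {R : realType} (a b x : R * R) :
  orient x b a = Num.sg (- Yc a b x).
Proof. by rewrite /orient /Yc; congr Num.sg; ring. Qed.

Lemma zero_triple {R : realType} (A B C : set (R * R)) x y z :
  convex_set2 A -> convex_set2 B -> convex_set2 C ->
  (B `&` C) x -> (A `&` C) y -> (A `&` B) z -> orient x y z = 0 ->
  exists m, A m /\ B m /\ C m.
Proof.
move=> cA cB cC [xB xC] [yA yC] [zA zB] ho.
have [eyz|nyz] := eqVneq y z.
  by exists y; split; [done | split; [rewrite eyz | done]].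
have hN : 0 < Xc y z z.
  have q1 : 0 <= (z.1 - y.1) * (z.1 - y.1) by rewrite -expr2 sqr_ge0.
  have q2 : 0 <= (z.2 - y.2) * (z.2 - y.2) by rewrite -expr2 sqr_ge0.
  rewrite lt_neqAle; apply/andP; split; last by rewrite /Xc; lra.
  apply/eqP => h0.
  have s1 : (z.1 - y.1) * (z.1 - y.1) = 0 by move: h0; rewrite /Xc; lra.
  have s2 : (z.2 - y.2) * (z.2 - y.2) = 0 by move: h0; rewrite /Xc; lra.
  move/eqP: s1; rewrite mulf_eq0 orbb subr_eq0 => /eqP s1.
  move/eqP: s2; rewrite mulf_eq0 orbb subr_eq0 => /eqP s2.
  move/eqP: nyz; apply.
  by rewrite [y]surjective_pairing [z]surjective_pairing s1 s2.
have hY : Yc y z x = 0.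
  move: ho; rewrite /orient => /eqP; rewrite sgr_cp0 => /eqP ho.
  by rewrite -ho /Yc; ring.
have Yy : Yc y z y = 0 by rewrite /Yc; ring.
have Yz : Yc y z z = 0 by rewrite /Yc; ring.
have Xy : Xc y z y = 0 by rewrite /Xc; ring.
have [h1|h1] := leP (Xc y z x) 0.
  have g1 : Xc y z x <= Xc y z y by rewrite Xy.
  have g2 : Xc y z y <= Xc y z z by rewrite Xy; exact: ltW.
  have [t [t0 [t1 ey]]] := between hN Yy hY Yz g1 g2.
  exists y; split; first done; split; last done.
  rewrite ey; exact: cB.
have [h2|h2] := leP (Xc y z x) (Xc y z z).
  have g1 : Xc y z y <= Xc y z x by rewrite Xy; exact: ltW.
  have [t [t0 [t1 ex]]] := between hN hY Yy Yz g1 h2.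
  exists x; split; last by [].
  rewrite ex; exact: cA.
have g1 : Xc y z y <= Xc y z z by rewrite Xy; exact: ltW.
have [t [t0 [t1 ez]]] := between hN Yz Yy hY g1 (ltW h2).
exists z; split; first done; split; first done.
rewrite ez; exact: cC.
Qed.
Arguments zero_triple {R A B C x y z}.

Lemma L1 {R : realType} (K0 Ki Kj : set (R * R)) (a b x P Q : R * R) (s : R) :
  convex_set2 K0 -> convex_set2 Ki -> convex_set2 Kj ->
  K0 a -> Ki a -> K0 b -> Kj b -> Ki x -> Kj x -> Ki P -> Kj Q ->
  0 < Xc a b b -> Yc a b x * Yc a b P < 0 -> Yc a b x * Yc a b Q < 0 -> s != 0 ->
  (forall y z, (K0 `&` Kj) y -> (K0 `&` Ki) z -> orient x y z = s) ->
  Xc a b (cvx (Yc a b x / (Yc a b x - Yc a b P)) P x) <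
  Xc a b (cvx (Yc a b x / (Yc a b x - Yc a b Q)) Q x).
Proof.
move=> c0 ci cj a0 ai b0 bj xi xj Pi Qj hN hP hQ hs H.
have [ti0 ti1] := cross_t hP.
have [tj0 tj1] := cross_t hQ.
have Yqi := cross_on hP.
have Yqj := cross_on hQ.
set qi := cvx _ P x in Yqi *.
set qj := cvx _ Q x in Yqj *.
have qiK : Ki qi by exact: ci.
have qjK : Kj qj by exact: cj.
have Ya : Yc a b a = 0 by rewrite /Yc; ring.
have Xa : Xc a b a = 0 by rewrite /Xc; ring.
have Yb : Yc a b b = 0 by rewrite /Yc; ring.
have Hm : forall m, K0 m -> Ki m -> Kj m -> False.
  move=> m m0 mi mj.
  have := H m m (conj m0 mj) (conj m0 mi).
  rewrite /orient.
  have -> : (m.1 - x.1) * (m.2 - x.2) - (m.2 - x.2) * (m.1 - x.1) = 0 by ring.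
  rewrite sgr0 => h0.
  by move: hs; rewrite -h0 eqxx.
rewrite ltNge; apply/negP => hle.
have [hj|hj] := leP (Xc a b qj) 0.
  have g1 : Xc a b qj <= Xc a b a by rewrite Xa.
  have g2 : Xc a b a <= Xc a b b by rewrite Xa; exact: ltW.
  have [t [t0 [t1 ea]]] := between hN Ya Yqj Yb g1 g2.
  apply: (Hm a a0 ai); rewrite ea; exact: cj.
have [hi|hi] := leP (Xc a b b) (Xc a b qi).
  have g1 : Xc a b a <= Xc a b b by rewrite Xa; exact: ltW.
  have [t [t0 [t1 eb]]] := between hN Yb Ya Yqi g1 hi.
  apply: (Hm b b0 _ bj); rewrite eb; exact: ci.
have g1 : Xc a b a <= Xc a b qi by rewrite Xa; lra.
have [t [t0 [t1 e1]]] := between hN Yqi Ya Yb g1 (ltW hi).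
have [t' [t0' [t1' e2]]] := between hN Yqi Yqj Yb hle (ltW hi).
apply: (Hm qi _ qiK).
  rewrite e1; exact: c0.
rewrite e2; exact: cj.
Qed.
Arguments L1 {R K0 Ki Kj a b x P Q s}.

Lemma cc_lt {R : realType} (xx yx xp yp xq yq : R) :
  yx * yp < 0 -> yx * yq < 0 ->
  yx / (yx - yp) * xp + (1 - yx / (yx - yp)) * xx <
  yx / (yx - yq) * xq + (1 - yx / (yx - yq)) * xx ->
  0 < yx * det2 (xp - xx) (yp - yx) (xq - xx) (yq - yx).
Proof.
move=> hP hQ hlt.
have h1 : 0 < (yx - yp) * yx by nra.
have h2 : 0 < (yx - yq) * yx by nra.
have n1 : yx - yp != 0 by apply/eqP => e; rewrite e mul0r in h1; lra.
have n2 : yx - yq != 0 by apply/eqP => e; rewrite e mul0r in h2; lra.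
have nx : yx != 0 by apply/eqP => e; rewrite e mulr0 in h1; lra.
have hk : 0 < (yx - yp) * (yx - yq).
  have : 0 < ((yx - yp) * yx) * ((yx - yq) * yx) by apply: mulr_gt0.
  have -> : ((yx - yp) * yx) * ((yx - yq) * yx) = ((yx - yp) * (yx - yq)) * (yx * yx) by ring.
  have : 0 < yx * yx by nra.
  nra.
have e : yx / (yx - yq) * xq + (1 - yx / (yx - yq)) * xx -
         (yx / (yx - yp) * xp + (1 - yx / (yx - yp)) * xx) =
         yx * det2 (xp - xx) (yp - yx) (xq - xx) (yq - yx) / ((yx - yp) * (yx - yq)).
  rewrite /det2; field.
  by rewrite n1 n2.
have : 0 < yx * det2 (xp - xx) (yp - yx) (xq - xx) (yq - yx) / ((yx - yp) * (yx - yq)).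
  by rewrite -e subr_gt0.
move: (yx * _) => D hD.
have -> : D = (D / ((yx - yp) * (yx - yq))) * ((yx - yp) * (yx - yq)).
  field; by rewrite n1 n2.
exact: mulr_gt0.
Qed.
Arguments cc_lt {R xx yx xp yp xq yq}.

Lemma fin {R : realType} (xu yu xw yw xd yd xe ye : R) : 0 < yu -> 0 < yw -> yd < 0 -> ye < 0 ->
  0 < yd * det2 (xu-xd) (yu-yd) (xw-xd) (yw-yd) ->
  0 < yu * det2 (xd-xu) (yd-yu) (xe-xu) (ye-yu) ->
  0 < yw * det2 (xe-xw) (ye-yw) (xd-xw) (yd-yw) ->
  0 < ye * det2 (xw-xe) (yw-ye) (xu-xe) (yu-ye) -> False.
Proof.
move=> hu hw hd he.
have id : (- det2 (xw-xe) (yw-ye) (xu-xe) (yu-ye)) * yd - det2 (xu-xd) (yu-yd) (xw-xd) (yw-yd) * ye = det2 (xd-xu) (yd-yu) (xe-xu) (ye-yu) * yw + det2 (xe-xw) (ye-yw) (xd-xw) (yd-yw) * yu.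
  rewrite /det2; ring.
move: id.
move: (det2 (xu-xd) _ _ _) (det2 (xd-xu) _ _ _) (det2 (xe-xw) _ _ _) (det2 (xw-xe) _ _ _) => D1 D2 D3 D4 id h1 h2 h3 h4.
have e1 : D1 < 0 by nra.
have e2 : 0 < D2 by nra.
have e3 : 0 < D3 by nra.
have e4 : D4 < 0 by nra.
nra.
Qed.
Arguments fin {R xu yu xw yw xd yd xe ye}.

Lemma zero_set {R : realType} (A B C : set (R * R)) :
  convex_set2 A -> convex_set2 B -> convex_set2 C ->
  (B `&` C) !=set0 -> (A `&` C) !=set0 -> (A `&` B) !=set0 ->
  set_orient_is A B C 0 -> exists m, A m /\ B m /\ C m.
Proof.
move=> cA cB cC [x hx] [y hy] [z hz].
case=> [[[m [[hA hB] hC]] _] | [_ H]]; first by exists m.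
exact: zero_triple cA cB cC hx hy hz (H x y z hx hy hz).
Qed.
Arguments zero_set {R A B C}.

Lemma nz_set {R : realType} (A B C : set (R * R)) (s : R) :
  s != 0 -> set_orient_is A B C s ->
  forall x y z, (B `&` C) x -> (A `&` C) y -> (A `&` B) z -> orient x y z = s.
Proof.
move=> hs; case=> [[_ h]|[_ h]]; last exact: h.
by rewrite h eqxx in hs.
Qed.
Arguments nz_set {R A B C s}.

Theorem theorem2 (R : realType) :
  exists p : 'I_5 -> R * R, injective p /\
    ~ exists K : 'I_5 -> set (R * R),
        (forall i, compact (K i) /\ convex_set2 (K i)) /\
        (forall i j, (K i `&` K j) !=set0) /\
        (forall i j k : 'I_5, i != j -> j != k -> i != k ->
           set_orient_is (K i) (K j) (K k) (orient (p i) (p j) (p k))).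
Proof.
pose pts : seq (R * R) := [:: (0, 0); (1, 0); (-1, 0); (0, 1); (0, -1)].
exists (fun i : 'I_5 => nth (0, 0) pts i).
split.
  move=> i j; case: i => [[|[|[|[|[|i]]]]] Hi] //; case: j => [[|[|[|[|[|j]]]]] Hj] //=;
    try (by move=> _; apply/val_inj);
    by move=> H; exfalso; case: H => *; lra.
move=> [K [Hc [Hp Ho]]].
pose i0 : 'I_5 := @Ordinal 5 0 isT.
pose i1 : 'I_5 := @Ordinal 5 1 isT.
pose i2 : 'I_5 := @Ordinal 5 2 isT.
pose i3 : 'I_5 := @Ordinal 5 3 isT.
pose i4 : 'I_5 := @Ordinal 5 4 isT.
have O012 : orient (nth (0, 0) pts i0) (nth (0, 0) pts i1) (nth (0, 0) pts i2) = 0.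
  by rewrite /orient /=; apply/eqP; rewrite sgr_cp0; apply/eqP; ring.
have O034 : orient (nth (0, 0) pts i0) (nth (0, 0) pts i3) (nth (0, 0) pts i4) = 0.
  by rewrite /orient /=; apply/eqP; rewrite sgr_cp0; apply/eqP; ring.
have O013 : orient (nth (0, 0) pts i0) (nth (0, 0) pts i1) (nth (0, 0) pts i3) = 1.
  by rewrite /orient /= gtr0_sg //; lra.
have O014 : orient (nth (0, 0) pts i0) (nth (0, 0) pts i1) (nth (0, 0) pts i4) = -1.
  by rewrite /orient /= ltr0_sg //; lra.
have O023 : orient (nth (0, 0) pts i0) (nth (0, 0) pts i2) (nth (0, 0) pts i3) = -1.
  by rewrite /orient /= ltr0_sg //; lra.
have O024 : orient (nth (0, 0) pts i0) (nth (0, 0) pts i2) (nth (0, 0) pts i4) = 1.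
  by rewrite /orient /= gtr0_sg //; lra.
have H012 := Ho i0 i1 i2 isT isT isT; rewrite O012 in H012.
have H034 := Ho i0 i3 i4 isT isT isT; rewrite O034 in H034.
have n1 : (1 : R) != 0 by rewrite oner_eq0.
have nm1 : (-1 : R) != 0 by rewrite oppr_eq0 oner_eq0.
have H013 := Ho i0 i1 i3 isT isT isT; rewrite O013 in H013.
have {}H013 := nz_set n1 H013.
have H014 := Ho i0 i1 i4 isT isT isT; rewrite O014 in H014.
have {}H014 := nz_set nm1 H014.
have H023 := Ho i0 i2 i3 isT isT isT; rewrite O023 in H023.
have {}H023 := nz_set nm1 H023.
have H024 := Ho i0 i2 i4 isT isT isT; rewrite O024 in H024.
have {}H024 := nz_set n1 H024.
have c0 := (Hc i0).2; have c1 := (Hc i1).2; have c2 := (Hc i2).2;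
  have c3 := (Hc i3).2; have c4 := (Hc i4).2.
have [a [a0 [a1 a2]]] := zero_set c0 c1 c2 (Hp i1 i2) (Hp i0 i2) (Hp i0 i1) H012.
have [b [b0 [b3 b4]]] := zero_set c0 c3 c4 (Hp i3 i4) (Hp i0 i4) (Hp i0 i3) H034.
have [d [d1 d3]] := Hp i1 i3.
have [u [u1 u4]] := Hp i1 i4.
have [w [w2 w3]] := Hp i2 i3.
have [e [e2 e4]] := Hp i2 i4.
have Yd : Yc a b d < 0.
  have := H013 d b a (conj d1 d3) (conj b0 b3) (conj a0 a1).
  rewrite orient_Y => /eqP; rewrite sgr_cp0; lra.
have Yu : 0 < Yc a b u.
  have := H014 u b a (conj u1 u4) (conj b0 b4) (conj a0 a1).
  rewrite orient_Y => /eqP; rewrite sgr_cp0; lra.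
have Yw : 0 < Yc a b w.
  have := H023 w b a (conj w2 w3) (conj b0 b3) (conj a0 a2).
  rewrite orient_Y => /eqP; rewrite sgr_cp0; lra.
have Ye : Yc a b e < 0.
  have := H024 e b a (conj e2 e4) (conj b0 b4) (conj a0 a2).
  rewrite orient_Y => /eqP; rewrite sgr_cp0; lra.
have hN : 0 < Xc a b b.
  have q1 : 0 <= (b.1 - a.1) * (b.1 - a.1) by rewrite -expr2 sqr_ge0.
  have q2 : 0 <= (b.2 - a.2) * (b.2 - a.2) by rewrite -expr2 sqr_ge0.
  rewrite lt_neqAle; apply/andP; split; last by rewrite /Xc; lra.
  apply/eqP => h0.
  have s1 : (b.1 - a.1) * (b.1 - a.1) = 0 by move: h0; rewrite /Xc; lra.
  have s2 : (b.2 - a.2) * (b.2 - a.2) = 0 by move: h0; rewrite /Xc; lra.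
  move/eqP: s1; rewrite mulf_eq0 orbb => /eqP s1.
  move/eqP: s2; rewrite mulf_eq0 orbb => /eqP s2.
  by move: Yd; rewrite /Yc s1 s2 !mul0r subrr ltxx.
have L13 := L1 c0 c1 c3 a0 a1 b0 b3 d1 d3 u1 w3 hN
  (ltac:(nra) : Yc a b d * Yc a b u < 0) (ltac:(nra) : Yc a b d * Yc a b w < 0) n1
  (fun y z hy hz => H013 d y z (conj d1 d3) hy hz).
have L14 := L1 c0 c1 c4 a0 a1 b0 b4 u1 u4 d1 e4 hN
  (ltac:(nra) : Yc a b u * Yc a b d < 0) (ltac:(nra) : Yc a b u * Yc a b e < 0) nm1
  (fun y z hy hz => H014 u y z (conj u1 u4) hy hz).
have L23 := L1 c0 c2 c3 a0 a2 b0 b3 w2 w3 e2 d3 hN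
  (ltac:(nra) : Yc a b w * Yc a b e < 0) (ltac:(nra) : Yc a b w * Yc a b d < 0) nm1
  (fun y z hy hz => H023 w y z (conj w2 w3) hy hz).
have L24 := L1 c0 c2 c4 a0 a2 b0 b4 e2 e4 w2 u4 hN
  (ltac:(nra) : Yc a b e * Yc a b w < 0) (ltac:(nra) : Yc a b e * Yc a b u < 0) n1
  (fun y z hy hz => H024 e y z (conj e2 e4) hy hz).
rewrite !Xc_cvx in L13 L14 L23 L24.
have D13 := cc_lt (ltac:(nra) : Yc a b d * Yc a b u < 0) (ltac:(nra) : Yc a b d * Yc a b w < 0) L13.
have D14 := cc_lt (ltac:(nra) : Yc a b u * Yc a b d < 0) (ltac:(nra) : Yc a b u * Yc a b e < 0) L14.
have D23 := cc_lt (ltac:(nra) : Yc a b w * Yc a b e < 0) (ltac:(nra) : Yc a b w * Yc a b d < 0) L23.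
have D24 := cc_lt (ltac:(nra) : Yc a b e * Yc a b w < 0) (ltac:(nra) : Yc a b e * Yc a b u < 0) L24.
exact: fin Yu Yw Yd Ye D13 D14 D23 D24.
Qed.
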